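(* Let $\mathcal{F}=(\omega,\{\tau_j\}_{j\in[\pm n]})$ and $\mathcal{F}'=(\omega',\{\tau'_j\}_{j\in[\pm n]})$ be regular facets-pairing structures on $\mathcal{C}^n$, with associated tuples of signed permutations $(\omega;\widetilde\sigma_1,\widetilde\sigma_{-1},\dots,\widetilde\sigma_n,\widetilde\sigma_{-n})$ and $(\omega';\widetilde\sigma'_1,\widetilde\sigma'_{-1},\dots,\widetilde\sigma'_n,\widetilde\sigma'_{-n})$. Then $\mathcal{F}$ and $\mathcal{F}'$ are equivalent if and only if these tuples are shuffled-conjugate, i.e. there is a signed permutation $S$ of $[\pm n]$ with $\omega=S^{-1}\omega' S$ and $\widetilde\sigma_j=S^{-1}\widetilde\sigma'_{S(j)}S$ for all $j\in[\pm n]$.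
   Context: Let $[\pm n]=\{\pm1,\dots,\pm n\}$ and $\mathcal{C}^n=\{x\in\mathbb{R}^n: -\tfrac14\le x_i\le\tfrac14\}$. For $1\le i\le n$, $\mathbf{F}(i)$ and $\mathbf{F}(-i)$ denote the facets of $\mathcal{C}^n$ lying in $\{x_i=\tfrac14\}$ and $\{x_i=-\tfrac14\}$. For $j_1,\dots,j_s\in[\pm n]$ with pairwise distinct absolute values, $\mathbf{F}(j_1,\dots,j_s)=\mathbf{F}(j_1)\cap\dots\cap\mathbf{F}(j_s)$, a codimension-$s$ face; every proper face has this form. A signed permutation is a bijection $\sigma$ of $[\pm n]$ with $\sigma(-k)=-\sigma(k)$; symmetries $h$ of $\mathcal{C}^n$ correspond bijectively to signed permutations $\sigma$ via $h(\mathbf{F}(k))=\mathbf{F}(\sigma(k))$. A facets-pairing structure on $\mathcal{C}^n$ is a pair $(\omega,\{\tau_j\})$ where $\omega$ is a bijection of $[\pm n]$ with $\omega\circ\omega=\mathrm{id}$ and $\tau_j:\mathbf{F}(j)\to\mathbf{F}(\omega(j))$ ($j\in[\pm n]$) are face-preserving homeomorphisms with $\tau_{\omega(j)}=\tau_j^{-1}$, such that for all $j,k$ with $|j|\ne|k|$, writing $\tau_j(\mathbf{F}(j,k))=\mathbf{F}(\omega(j),k')$ and $\tau_k(\mathbf{F}(j,k))=\mathbf{F}(j',\omega(k))$, one has $\tau_{k'}(\tau_j(p))=\tau_{j'}(\tau_k(p))$ for all $p\in\mathbf{F}(j,k)$. It is regular if each $\tau_j$ is an isometry for the Euclidean metric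 and $\omega$ is a signed permutation. For a regular structure, define $\widetilde\sigma_j:[\pm n]\to[\pm n]$ by $\widetilde\sigma_j(\pm j)=\pm\omega(j)$ and, for $k\ne\pm j$, $\widetilde\sigma_j(k)$ is determined by $\tau_j(\mathbf{F}(j,k))=\mathbf{F}(\omega(j),\widetilde\sigma_j(k))$; each $\widetilde\sigma_j$ is a signed permutation. Two facets-pairing structures $(\omega,\{\tau_j\})$, $(\omega',\{\tau'_j\})$ are equivalent if there is a symmetry $h$ of $\mathcal{C}^n$ with $\tau_j=h^{-1}\circ\tau'_{j'}\circ h$ on $\mathbf{F}(j)$ for every $j$, where $\mathbf{F}(j')=h(\mathbf{F}(j))$. *)

(* Defs.v *)
From mathcomp Require Import all_boot.
From Stdlib Require Import Reals.
Set Implicit Arguments.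
Unset Strict Implicit.
Unset Printing Implicit Defensive.

Local Open Scope R_scope.

(* Signed indices [±n]: (i, true) stands for +(i+1), (i, false) for -(i+1). *)
Definition sidx (n : nat) : Type := ('I_n * bool)%type.
Definition sneg (n : nat) (j : sidx n) : sidx n := (j.1, ~~ j.2).
Definition sabs (n : nat) (j : sidx n) : 'I_n := j.1.

Definition pt (n : nat) : Type := 'I_n -> R.

Definition edist (n : nat) (x y : pt n) : R :=
  sqrt (\big[Rplus/0]_(i < n) ((x i - y i) ^ 2)).

Definition cube (n : nat) (x : pt n) : Prop :=
  forall i : 'I_n, - (1/4) <= x i <= 1/4.

Definition onfacet (n : nat) (j : sidx n) (x : pt n) : Prop :=
  x j.1 = (if j.2 then 1/4 else - (1/4)).

Definition face (n : nat) (l : seq (sidx n)) (x : pt n) : Prop :=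
  cube x /\ forall j, j \in l -> onfacet j x.

Definition facet (n : nat) (j : sidx n) : pt n -> Prop := face [:: j].

Definition abs_distinct (n : nat) (l : seq (sidx n)) : bool :=
  uniq (map (@sabs n) l).

Definition maps_onto (n : nat) (f : pt n -> pt n) (A B : pt n -> Prop) : Prop :=
  forall y, (exists x, A x /\ f x = y) <-> B y.

Definition continuous_on (n : nat) (A : pt n -> Prop) (f : pt n -> pt n) : Prop :=
  forall x, A x -> forall eps, 0 < eps -> exists delta, 0 < delta /\
    forall y, A y -> edist x y < delta -> edist (f x) (f y) < eps.

Definition face_preserving (n : nat) (f : pt n -> pt n) (j jw : sidx n) : Prop :=
  forall l, abs_distinct l -> j \in l ->
    exists l', abs_distinct l' /\ jw \in l' /\ maps_onto f (face l) (face l').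

Definition signed_perm (n : nat) (s : sidx n -> sidx n) : Prop :=
  bijective s /\ forall k, s (sneg k) = sneg (s k).

Definition facets_pairing (n : nat) (omega : sidx n -> sidx n)
    (tau : sidx n -> pt n -> pt n) : Prop :=
  (forall j, omega (omega j) = j) /\
  (forall j x, facet j x -> facet (omega j) (tau j x)) /\
  (forall j, continuous_on (facet j) (tau j)) /\
  (forall j, face_preserving (tau j) j (omega j)) /\
  (forall j x, facet j x -> tau (omega j) (tau j x) = x) /\
  (forall j k j' k',
     sabs j != sabs k -> sabs (omega j) != sabs k' -> sabs j' != sabs (omega k) ->
     maps_onto (tau j) (face [:: j; k]) (face [:: omega j; k']) ->
     maps_onto (tau k) (face [:: j; k]) (face [:: j'; omega k]) ->
     forall p, face [:: j; k] p -> tau k' (tau j p) = tau j' (tau k p)).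

Definition regular_fps (n : nat) (omega : sidx n -> sidx n)
    (tau : sidx n -> pt n -> pt n) : Prop :=
  facets_pairing omega tau /\ signed_perm omega /\
  (forall j x y, facet j x -> facet j y -> edist (tau j x) (tau j y) = edist x y).

Definition sigma_tilde (n : nat) (omega : sidx n -> sidx n)
    (tau : sidx n -> pt n -> pt n) (st : sidx n -> sidx n -> sidx n) : Prop :=
  forall j,
    st j j = omega j /\ st j (sneg j) = sneg (omega j) /\
    forall k, sabs k != sabs j ->
      maps_onto (tau j) (face [:: j; k]) (face [:: omega j; st j k]).

Definition cube_symmetry (n : nat) (h : pt n -> pt n) : Prop :=
  (forall x y, edist (h x) (h y) = edist x y) /\ maps_onto h (@cube n) (@cube n).

Definition fps_equivalent (n : nat)
    (omega : sidx n -> sidx n) (tau : sidx n -> pt n -> pt n)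
    (omega' : sidx n -> sidx n) (tau' : sidx n -> pt n -> pt n) : Prop :=
  exists h hinv : pt n -> pt n,
    cube_symmetry h /\ cancel h hinv /\ cancel hinv h /\
    forall j j', maps_onto h (facet j) (facet j') ->
      forall p, facet j p -> tau j p = hinv (tau' j' (h p)).

Definition shuffled_conjugate (n : nat)
    (omega : sidx n -> sidx n) (st : sidx n -> sidx n -> sidx n)
    (omega' : sidx n -> sidx n) (st' : sidx n -> sidx n -> sidx n) : Prop :=
  exists S Sinv : sidx n -> sidx n,
    signed_perm S /\ cancel S Sinv /\ cancel Sinv S /\
    (forall j, omega j = Sinv (omega' (S j))) /\
    (forall j k, st j k = Sinv (st' (S j) (S k))).

(* Main.v *)
From HB Require Import structures.
Require Import Defs.
From mathcomp Require Import all_boot.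
From Stdlib Require Import Reals Lra Classical ClassicalEpsilon FunctionalExtensionality.
Set Implicit Arguments.
Unset Strict Implicit.
Unset Printing Implicit Defensive.

HB.instance Definition _ := Monoid.isComLaw.Build R 0%R Rplus
  (fun a b c => esym (Rplus_assoc a b c)) Rplus_comm Rplus_0_l.

Open Scope R_scope.


Definition sd2 n (x y : pt n) : R := \big[Rplus/0]_(i < n) ((x i - y i) ^ 2).
Definition vl n (j : sidx n) : R := if j.2 then 1/4 else - (1/4).

Lemma vl_range n (j : sidx n) : - (1/4) <= vl j <= 1/4.
Proof. rewrite /vl; case: j.2; lra. Qed.

Lemma vl_sneg n (j : sidx n) : vl (sneg j) = - vl j.
Proof. rewrite /vl /sneg /=; case: j.2 => /=; lra. Qed.

Lemma vl_inj n (a b : sidx n) : a.1 = b.1 -> vl a = vl b -> a = b.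
Proof.
case: a => ia sa; case: b => ib sb /= -> ; rewrite /vl /=.
by case: sa; case: sb => //= H; exfalso; lra.
Qed.

Lemma sum_ge0 n (P : pred 'I_n) (F : 'I_n -> R) :
  (forall i, P i -> 0 <= F i) -> 0 <= \big[Rplus/0]_(i < n | P i) F i.
Proof. move=> H; apply: (big_ind (fun x => 0 <= x)) => //; [lra | move=> a b ? ?; lra]. Qed.

Lemma sum_le n (P : pred 'I_n) (F G : 'I_n -> R) :
  (forall i, P i -> F i <= G i) ->
  \big[Rplus/0]_(i < n | P i) F i <= \big[Rplus/0]_(i < n | P i) G i.
Proof. move=> H; apply: (big_ind2 (fun x y => x <= y)) => //; [lra | move=> a b c d ? ?; lra]. Qed.

Lemma sum_eq_le n (P : pred 'I_n) (F G : 'I_n -> R) :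
  (forall i, P i -> F i <= G i) ->
  \big[Rplus/0]_(i < n | P i) F i = \big[Rplus/0]_(i < n | P i) G i ->
  forall i, P i -> F i = G i.
Proof.
move=> H E i Pi; move: E; rewrite (bigD1 i Pi) (bigD1 (F:=G) i Pi) /= => E.
have H1 : \big[Rplus/0]_(l < n | P l && (l != i)) F l <= \big[Rplus/0]_(l < n | P l && (l != i)) G l.
  by apply: sum_le => l /andP [] /H.
have E' : F i + \big[Rplus/0]_(l < n | P l && (l != i)) F l = G i + \big[Rplus/0]_(l < n | P l && (l != i)) G l := E.
have H2 := H i Pi; lra.
Qed.

Lemma sum_const n (c : R) : \big[Rplus/0]_(i < n) c = INR n * c.
Proof. rewrite big_const_ord; elim: n => [|n IH]; first (simpl; ring). rewrite S_INR /= IH; ring. Qed.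

Lemma sd2_ge0 n (x y : pt n) : 0 <= sd2 x y.
Proof. apply: sum_ge0 => i _; apply: pow2_ge_0. Qed.

Lemma sd2_split n (x y : pt n) i :
  sd2 x y = (x i - y i) ^ 2 + \big[Rplus/0]_(l < n | l != i) (x l - y l) ^ 2.
Proof. by rewrite /sd2 (bigD1 i). Qed.

Lemma sd2_one n (x y : pt n) i : (forall l, l != i -> x l = y l) -> sd2 x y = (x i - y i) ^ 2.
Proof.
move=> H; rewrite (sd2_split _ _ i) big1 ?Rplus_0_r // => l /H ->; ring.
Qed.

Lemma edist_d2 n (x y x' y' : pt n) : edist x y = edist x' y' -> sd2 x y = sd2 x' y'.
Proof. move=> H; apply: sqrt_inj; [apply sd2_ge0 | apply sd2_ge0 | exact H]. Qed.

Lemma sd2_edist n (x y x' y' : pt n) : sd2 x y = sd2 x' y' -> edist x y = edist x' y'.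
Proof. by rewrite /edist /sd2 => ->. Qed.

Lemma sd2_lb n (x a : pt n) (k : sidx n) : onfacet k a -> (x k.1 - vl k) ^ 2 <= sd2 x a.
Proof.
rewrite /onfacet => Ha; rewrite (sd2_split _ _ k.1) Ha.
have := sum_ge0 (P := fun l => l != k.1) (F := fun l => (x l - a l) ^ 2) (fun l _ => pow2_ge_0 _).
rewrite /vl; lra.
Qed.

Definition upd n (x : pt n) (k : sidx n) : pt n := fun l => if l == k.1 then vl k else x l.

Lemma sd2_upd n (x : pt n) k : sd2 x (upd x k) = (x k.1 - vl k) ^ 2.
Proof.
rewrite (sd2_one (i := k.1)); first by rewrite /upd eqxx.
by move=> l /negbTE; rewrite /upd => ->.
Qed.

Lemma facetE n (j : sidx n) x : facet j x <-> cube x /\ onfacet j x.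
Proof.
rewrite /facet /face; split.
- by case=> Hc H; split => //; apply: H; rewrite mem_seq1.
- case=> Hc H; split => // j0; rewrite mem_seq1 => /eqP ->; exact H.
Qed.

Lemma face2E n (a b : sidx n) x : face [:: a; b] x <-> cube x /\ onfacet a x /\ onfacet b x.
Proof.
rewrite /face; split.
- case=> Hc H; split => //; split; apply: H; by rewrite !inE eqxx ?orbT.
- case=> Hc [Ha Hb]; split => // j0; rewrite !inE => /orP [/eqP ->|/eqP ->] //.
Qed.

Lemma onfacetE n (j : sidx n) x : onfacet j x <-> x j.1 = vl j.
Proof. by []. Qed.

Definition mk n (l1 : 'I_n) r1 (l2 : 'I_n) r2 (l3 : 'I_n) r3 : pt n :=
  fun l => if l == l1 then r1 else if l == l2 then r2 else if l == l3 then r3 else 0.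

Lemma mk_cube n (l1 l2 l3 : 'I_n) r1 r2 r3 :
  - (1/4) <= r1 <= 1/4 -> - (1/4) <= r2 <= 1/4 -> - (1/4) <= r3 <= 1/4 ->
  cube (mk l1 r1 l2 r2 l3 r3).
Proof. move=> H1 H2 H3 l; rewrite /mk; do 3 case: ifP => _ //; lra. Qed.

Lemma vertex_upd_cube n (x : pt n) k : cube x -> cube (upd x k).
Proof. move=> H l; rewrite /upd; case: ifP => _ //; apply vl_range. Qed.

Definition vertex n (v : pt n) := forall l, v l = 1/4 \/ v l = - (1/4).

Lemma vertex_cube n (v : pt n) : vertex v -> cube v.
Proof. move=> H l; case: (H l) => ->; lra. Qed.

Lemma V1 n (v w : pt n) : cube v -> cube w -> sd2 v w = INR n / 4 -> vertex v.
Proof.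
move=> Hv Hw E.
have H : forall i, (v i - w i) ^ 2 = 1/4.
  move=> i; apply: (sum_eq_le (P := predT) (F := fun i => (v i - w i) ^ 2) (G := fun _ => 1/4)) => //.
  - move=> l _ /=; have := Hv l; have := Hw l; move=> [? ?] [? ?]; nra.
  - rewrite -/(sd2 v w) E sum_const; field.
move=> l; have := H l; have := Hv l; have := Hw l; move=> [? ?] [? ?] Hl.
have : (v l - w l - 1/2) * (v l - w l + 1/2) = 0 by nra.
case/Rmult_integral => ?; lra.
Qed.

Definition neg n (v : pt n) : pt n := fun l => - v l.

Lemma sd2_neg n (v : pt n) : vertex v -> sd2 v (neg v) = INR n / 4.
Proof.
move=> H; rewrite /sd2 (eq_bigr (fun _ => 1/4)) ?sum_const.
  field.
move=> i _; rewrite /neg; case: (H i) => ->; field.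
Qed.

Lemma V2 n (a b : pt n) : vertex a -> vertex b -> sd2 a b = 1/4 ->
  exists i, a i = - b i /\ forall l, l != i -> a l = b l.
Proof.
move=> Ha Hb E.
case: (classic (exists i, a i <> b i)) => [[i Hi]|Hn].
- have Hab : a i = - b i by case: (Ha i) => H1; case: (Hb i) => H2; lra.
  exists i; split => // l Hl.
  have E2 := E; rewrite (sd2_split _ _ i) Hab in E2.
  have Hrest : \big[Rplus/0]_(l < n | l != i) (a l - b l) ^ 2 = \big[Rplus/0]_(l < n | l != i) 0.
    rewrite [RHS]big1 //. have E3 : (- b i - b i) ^ 2 + \big[Rplus/0]_(l < n | l != i) (a l - b l) ^ 2 = 1/4 := E2.
    case: (Hb i) => Hbi; rewrite Hbi in E3; lra.
  have := sum_eq_le (P := fun l => l != i) (F := fun _ => 0) (G := fun l => (a l - b l) ^ 2) (fun l _ => pow2_ge_0 _) (esym Hrest) Hl.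
  move=> /= H0; nra.
- exfalso; have : sd2 a b = 0.
    rewrite /sd2 big1 // => l _; have -> : a l = b l.
      by apply: NNPP => H; apply: Hn; exists l.
    ring.
  lra.
Qed.

Lemma Fformula n (j : sidx n) (a b x : pt n) :
  a j.1 = vl j -> b j.1 = - vl j -> (forall l, l != j.1 -> a l = b l) ->
  (onfacet j x <-> sd2 x b - sd2 x a = 1/4).
Proof.
move=> Ha Hb Hl; rewrite onfacetE (sd2_split x b j.1) (sd2_split x a j.1) Ha Hb.
rewrite (eq_bigr (fun l => (x l - a l) ^ 2)); last by move=> l /Hl ->.
have := vl_range j; rewrite /vl; case: j.2 => H.
- have E : forall A : R, (x j.1 - - (1/4)) ^ 2 + A - ((x j.1 - 1/4) ^ 2 + A) = x j.1 by move=> A; field.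
  rewrite E; lra.
- have E : forall A : R, (x j.1 - - - (1/4)) ^ 2 + A - ((x j.1 - - (1/4)) ^ 2 + A) = - x j.1 by move=> A; field.
  rewrite E; lra.
Qed.

Lemma vl_sq n (j : sidx n) : vl j ^ 2 = 1/16.
Proof. rewrite /vl; case: j.2; field. Qed.

Lemma vl_cases n (j : sidx n) : vl j = 1/4 \/ vl j = - (1/4).
Proof. rewrite /vl; case: j.2; auto. Qed.

Lemma facet_image n (h hinv : pt n -> pt n) :
  (forall x y, sd2 (h x) (h y) = sd2 x y) -> cancel h hinv -> cancel hinv h ->
  (forall x, cube x -> cube (h x)) -> (forall y, cube y -> cube (hinv y)) ->
  forall j, exists j', maps_onto h (facet j) (facet j').
Proof.
move=> Hiso hK hiK Hc Hic j.
pose u : pt n := fun l => if l == j.1 then vl j else 1/4.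
pose u' : pt n := fun l => if l == j.1 then - vl j else 1/4.
have vu : vertex u by move=> l; rewrite /u; case: ifP => _; [apply vl_cases | auto].
have vu' : vertex u' by move=> l; rewrite /u'; case: ifP => _; [case: (vl_cases j) => ->; [right | left]; field| auto].
have hvert : forall v, vertex v -> vertex (h v).
  move=> v Hv; apply: (V1 (w := h (neg v))).
  - by apply/Hc/vertex_cube.
  - apply/Hc/vertex_cube => l; rewrite /neg; case: (Hv l) => ->; [right|left]; field.
  - by rewrite Hiso sd2_neg.
have Huu : sd2 (h u) (h u') = 1/4.
  rewrite Hiso (sd2_one (i := j.1)); last by move=> l /negbTE; rewrite /u /u' => ->.
  rewrite /u /u' eqxx; have := vl_sq j; nra.
have [i' [Hi' Hl]] := V2 (hvert _ vu) (hvert _ vu') Huu.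
have [j' [E1 E2]] : exists j' : sidx n, j'.1 = i' /\ h u i' = vl j'.
  case: (hvert _ vu i') => H; [exists (i', true) | exists (i', false)]; by split.
have key : forall y, onfacet j' y <-> sd2 y (h u') - sd2 y (h u) = 1/4.
  move=> y; subst i'; apply: Fformula => //.
  rewrite Hi' in E2; lra.
have key0 : forall x, onfacet j x <-> sd2 x u' - sd2 x u = 1/4.
  move=> x; apply: Fformula; rewrite /u /u' ?eqxx //.
  by move=> l /negbTE ->.
exists j' => y; split.
- case=> x [/facetE [Hcx Hx] <-]; apply/facetE; split; first by apply: Hc.
  by apply/key; rewrite !Hiso; apply/key0.
- case/facetE => Hcy Hy; exists (hinv y); split; last by apply: hiK.
  apply/facetE; split; first by apply: Hic.
  apply/key0; rewrite -(Hiso (hinv y) u') -(Hiso (hinv y) u) hiK; by apply/key.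
Qed.

Definition e1 n (a : sidx n) : pt n := fun l => if l == a.1 then vl a else 0.
Definition e2 n (a b : sidx n) : pt n :=
  fun l => if l == a.1 then vl a else if l == b.1 then vl b else 0.

Lemma e1_facet n (a : sidx n) : facet a (e1 a).
Proof.
apply/facetE; split; last by rewrite onfacetE /e1 eqxx.
move=> l; rewrite /e1; case: ifP => _; [apply vl_range | lra].
Qed.

Lemma e2_cube n (a b : sidx n) : cube (e2 a b).
Proof. move=> l; rewrite /e2; case: ifP => _; first apply vl_range; case: ifP => _; [apply vl_range | lra]. Qed.

Lemma e2_a n (a b : sidx n) : onfacet a (e2 a b).
Proof. by rewrite onfacetE /e2 eqxx. Qed.

Lemma e2_b n (a b : sidx n) : a.1 != b.1 -> onfacet b (e2 a b).
Proof. by move=> H; rewrite onfacetE /e2 eq_sym (negbTE H) eqxx. Qed.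

Lemma vl_neq0 n (a : sidx n) : vl a <> 0.
Proof. case: (vl_cases a) => ->; lra. Qed.

Lemma facet_eq n (a b : sidx n) : (forall y, facet a y <-> facet b y) -> a = b.
Proof.
move=> H; have /H /facetE [_ Hv] := e1_facet a; move: Hv; rewrite onfacetE /e1.
case: eqP => [E|_] Hv; first by apply: vl_inj.
by exfalso; exact: (vl_neq0 (esym Hv)).
Qed.

Lemma vl_sneg_neq n (a : sidx n) : vl (sneg a) = vl a -> False.
Proof. rewrite vl_sneg => H; have H0 : vl a = 0 by lra. exact: (vl_neq0 H0). Qed.

Lemma spair_eq n (a b : sidx n) : a.1 = b.1 -> a <> b -> b = sneg a.
Proof.
case: a => ia sa; case: b => ib sb /= -> H; rewrite /sneg /=; congr pair.
by case: sa H; case: sb.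
Qed.

Lemma facet_disj n (a b : sidx n) : (forall y, ~ (facet a y /\ facet b y)) -> b = sneg a.
Proof.
move=> H; case: (eqVneq a.1 b.1) => E.
- apply: spair_eq => // Eab; subst b; apply: (H (e1 a)); split; apply: e1_facet.
- exfalso; apply: (H (e2 a b)); split; apply/facetE; split; try apply: e2_cube.
  + apply: e2_a.
  + by apply: e2_b.
Qed.

Lemma face_c_eq n (c a : sidx n) y : face [:: c; a] y -> a.1 = c.1 -> a = c.
Proof.
case/face2E => _ [Hc Ha] E; apply: vl_inj => //.
move: Ha Hc; rewrite !onfacetE E => -> //.
Qed.

Lemma e2_0 n (a b : sidx n) l : l != a.1 -> l != b.1 -> e2 a b l = 0.
Proof. by rewrite /e2 => /negbTE -> /negbTE ->. Qed.

Lemma e2_face n (a b : sidx n) : a.1 != b.1 -> face [:: a; b] (e2 a b).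
Proof. move=> H; apply/face2E; split; [apply e2_cube | split; [apply e2_a | by apply e2_b]]. Qed.

Lemma face_cc n (c : sidx n) y : facet c y -> face [:: c; c] y.
Proof. case/facetE => H1 H2; by apply/face2E. Qed.

Lemma face_sub_cc n (c b : sidx n) : (forall y, face [:: c; c] y -> face [:: c; b] y) -> b = c.
Proof.
move=> H; case: (eqVneq b.1 c.1) => E.
- have /H /face2E [_ [_ Hb]] := face_cc (e1_facet c).
  apply: vl_inj => //; move: Hb; rewrite onfacetE /e1 E eqxx => <- //.
- exfalso; have Hcs : c.1 != (sneg b).1 by rewrite eq_sym.
  have Hz := e2_face Hcs.
  have /H /face2E [_ [_ Hb]] : face [:: c; c] (e2 c (sneg b)).
    by case/face2E: Hz => ? [? ?]; apply/face2E.
  have := e2_b Hcs; rewrite !onfacetE => Hs.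
  apply: (@vl_sneg_neq _ b); rewrite /vl in Hs Hb *; etransitivity; [symmetry; exact Hs | exact Hb].
Qed.

Lemma face_eq2 n (c a b : sidx n) y0 : face [:: c; a] y0 ->
  (forall y, face [:: c; a] y <-> face [:: c; b] y) -> a = b.
Proof.
move=> Hy0 H; case: (eqVneq a.1 c.1) => Eac.
- have Ea := face_c_eq Hy0 Eac; subst a.
  by symmetry; apply: face_sub_cc => y /H.
case: (eqVneq b.1 c.1) => Ebc.
- have Eb := face_c_eq (proj1 (H y0) Hy0) Ebc; subst b.
  by apply: face_sub_cc => y /H.
have Hca : c.1 != a.1 by rewrite eq_sym.
have /H /face2E [_ [_ Hb]] := e2_face Hca.
move: Hb; rewrite onfacetE.
case: (eqVneq b.1 a.1) => Eba.
- move=> Hb; apply: vl_inj => //; rewrite -Hb Eba; by have := e2_b Hca.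
- by rewrite e2_0 // => /esym /vl_neq0.
Qed.

Lemma face_facet1 n (a b : sidx n) y : face [:: a; b] y -> facet a y.
Proof. by case/face2E => ? [? ?]; apply/facetE. Qed.

Section Uniq.
Variables (n : nat) (j c : sidx n) (m : sidx n -> sidx n) (f : pt n -> pt n).
Hypothesis Hiso : forall x y, facet j x -> facet j y -> sd2 (f x) (f y) = sd2 x y.
Hypothesis Hfac : forall x, facet j x -> facet c (f x).
Hypothesis Hface : forall k : sidx n, k.1 != j.1 -> maps_onto f (face [:: j; k]) (face [:: c; m k]).

Lemma uK p k : facet j p -> k.1 != j.1 ->
  (f p (m k).1 - vl (m k)) ^ 2 = (p k.1 - vl k) ^ 2.
Proof.
move=> Hp Hk; have [Hpc Hpj] := proj1 (facetE _ _) Hp.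
set a := upd p k.
have Ha : face [:: j; k] a.
  apply/face2E; split; first by apply vertex_upd_cube.
  split; rewrite onfacetE /a /upd; last by rewrite eqxx.
  by rewrite eq_sym (negbTE Hk).
have Haj := face_facet1 Ha.
have Hb : face [:: c; m k] (f a) := proj1 (Hface Hk (f a)) (ex_intro _ a (conj Ha erefl)).
have E1 : sd2 (f p) (f a) = (p k.1 - vl k) ^ 2 by rewrite Hiso // sd2_upd.
have [_ [Hbc Hbm]] := proj1 (face2E _ _ _) Hb.
have L1 := sd2_lb (f p) Hbm.
have [Hfpc Hfpo] := proj1 (facetE _ _) (Hfac Hp).
set b := upd (f p) (m k).
have Hbf : face [:: c; m k] b.
  apply/face2E; split; first by apply vertex_upd_cube.
  split; last by rewrite onfacetE /b /upd eqxx.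
  rewrite onfacetE /b /upd; case: eqP => [E|_]; last by apply/onfacetE.
  move: Hbc Hbm; rewrite !onfacetE E => -> //.
have [a' [Ha' Eb]] := proj2 (Hface Hk b) Hbf.
have E2 : sd2 (f p) b = (f p (m k).1 - vl (m k)) ^ 2 := sd2_upd _ _.
rewrite -Eb Hiso // in E2; last by apply: face_facet1 Ha'.
have [_ [_ Hak]] := proj1 (face2E _ _ _) Ha'.
have L2 := sd2_lb p Hak.
apply: Rle_antisym; [rewrite -E1; exact: L1 | rewrite -E2; exact: L2].
Qed.

Lemma mk_1 (l1 l2 l3 : 'I_n) r1 r2 r3 : mk l1 r1 l2 r2 l3 r3 l1 = r1.
Proof. by rewrite /mk eqxx. Qed.
Lemma mk_2 (l1 l2 l3 : 'I_n) r1 r2 r3 : l2 != l1 -> mk l1 r1 l2 r2 l3 r3 l2 = r2.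
Proof. by rewrite /mk eqxx => /negbTE ->. Qed.
Lemma mk_3 (l1 l2 l3 : 'I_n) r1 r2 r3 : l3 != l1 -> l3 != l2 -> mk l1 r1 l2 r2 l3 r3 l3 = r3.
Proof. by rewrite /mk eqxx => /negbTE -> /negbTE ->. Qed.

Lemma uD k : k.1 != j.1 -> (m k).1 != c.1.
Proof.
move=> Hk; apply/negP => /eqP E.
have Hjk : j.1 != k.1 by rewrite eq_sym.
have Ha := e2_face Hjk.
have Hb : face [:: c; m k] (f (e2 j k)) := proj1 (Hface Hk _) (ex_intro _ _ (conj Ha erefl)).
have Emc := face_c_eq Hb E.
have Hjs : j.1 != (sneg k).1 by [].
have Hp : facet j (e2 j (sneg k)) by apply/facetE; split; [apply e2_cube | apply e2_a].
have U := uK Hp Hk.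
have [_ Hfo] := proj1 (facetE _ _) (Hfac Hp).
have H1 : e2 j (sneg k) k.1 = - vl k by rewrite -vl_sneg; exact: (e2_b Hjs).
have H2 : f (e2 j (sneg k)) (m k).1 = vl (m k) by rewrite Emc; exact: Hfo.
rewrite H1 H2 in U; have := vl_sq k; have := vl_sq (m k); nra.
Qed.

Lemma uI (i1 i2 : 'I_n) : i1 != j.1 -> i2 != j.1 -> i1 != i2 ->
  (m (i1, true)).1 != (m (i2, true)).1.
Proof.
move=> H1 H2 H12; apply/negP => /eqP E.
have H21 : i2 != i1 by rewrite eq_sym.
have Pf : forall r, - (1/4) <= r <= 1/4 -> facet j (mk j.1 (vl j) i1 (1/4) i2 r).
  move=> r Hr; apply/facetE; split; last by rewrite onfacetE mk_1.
  apply: mk_cube => //; [apply vl_range | lra].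
have K1 : forall r, - (1/4) <= r <= 1/4 ->
   f (mk j.1 (vl j) i1 (1/4) i2 r) (m (i1, true)).1 = vl (m (i1, true)).
  move=> r Hr.
  have U : (f (mk j.1 (vl j) i1 (1/4) i2 r) (m (i1, true)).1 - vl (m (i1, true))) ^ 2
     = (mk j.1 (vl j) i1 (1/4) i2 r i1 - vl (i1, true)) ^ 2 := uK (Pf r Hr) (k := (i1, true)) H1.
  rewrite mk_2 // in U.
  have : (f (mk j.1 (vl j) i1 (1/4) i2 r) (m (i1, true)).1 - vl (m (i1, true))) ^ 2 = 0.
    by rewrite U /vl /=; ring.
  move=> U2; nra.
have K2 : forall r, - (1/4) <= r <= 1/4 ->
   (vl (m (i1, true)) - vl (m (i2, true))) ^ 2 = (r - 1/4) ^ 2.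
  move=> r Hr.
  have U : (f (mk j.1 (vl j) i1 (1/4) i2 r) (m (i2, true)).1 - vl (m (i2, true))) ^ 2
     = (mk j.1 (vl j) i1 (1/4) i2 r i2 - vl (i2, true)) ^ 2 := uK (Pf r Hr) (k := (i2, true)) H2.
  by rewrite mk_3 // -E K1 // in U.
have A := K2 (1/4) ltac:(lra).
have B := K2 (- (1/4)) ltac:(lra).
rewrite A in B; nra.
Qed.
End Uniq.

Lemma sq_inj (x y v : R) : - (1/4) <= x <= 1/4 -> - (1/4) <= y <= 1/4 ->
  (v = 1/4 \/ v = - (1/4)) -> (x - v) ^ 2 = (y - v) ^ 2 -> x = y.
Proof.
move=> Hx Hy Hv E.
have : (x - y) * (x + y - 2 * v) = 0 by rewrite -[LHS]Rplus_0_r; nra.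
case/Rmult_integral => H; first lra.
case: Hv => Hv; lra.
Qed.

Lemma uniqueness n (j c : sidx n) (m : sidx n -> sidx n) (f g : pt n -> pt n) :
  (forall x y, facet j x -> facet j y -> sd2 (f x) (f y) = sd2 x y) ->
  (forall x, facet j x -> facet c (f x)) ->
  (forall k : sidx n, k.1 != j.1 -> maps_onto f (face [:: j; k]) (face [:: c; m k])) ->
  (forall x y, facet j x -> facet j y -> sd2 (g x) (g y) = sd2 x y) ->
  (forall x, facet j x -> facet c (g x)) ->
  (forall k : sidx n, k.1 != j.1 -> maps_onto g (face [:: j; k]) (face [:: c; m k])) ->
  forall p, facet j p -> f p = g p.
Proof.
move=> Fi Ff Fo Gi Gf Go p Hp.
pose phi := fun i : 'I_n => if i == j.1 then c.1 else (m (i, true)).1.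
have phi_inj : injective phi.
  move=> a b; rewrite /phi.
  case: (eqVneq a j.1) => Ea; case: (eqVneq b j.1) => Eb.
  - by rewrite Ea Eb.
  - move=> E; exfalso; have := uD Fi Ff Fo (k := (b, true)) Eb; by rewrite -E eqxx.
  - move=> E; exfalso; have := uD Fi Ff Fo (k := (a, true)) Ea; by rewrite E eqxx.
  - move=> E; apply/eqP; apply: contraT => Hab.
    by have := uI Fi Ff Fo Ea Eb Hab; rewrite E eqxx.
have [phinv phK phiK] := injF_bij phi_inj.
have [Hfc Hfo] := proj1 (facetE _ _) (Ff _ Hp).
have [Hgc Hgo] := proj1 (facetE _ _) (Gf _ Hp).
apply: functional_extensionality => i'.
case: (eqVneq i' c.1) => Ei.
- by subst i'; move: Hfo Hgo; rewrite !onfacetE => -> ->.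
set i := phinv i'.
have Hi : phi i = i' by rewrite /i phiK.
have Hij : i != j.1 by apply/negP => /eqP E; move: Hi; rewrite /phi E eqxx => E2; move: Ei; rewrite E2 eqxx.
have Hm : (m (i, true)).1 = i' by move: Hi; rewrite /phi (negbTE Hij).
have U1 := uK Fi Ff Fo (k := (i, true)) Hp Hij.
have U2 := uK Gi Gf Go (k := (i, true)) Hp Hij.
rewrite Hm in U1 U2.
apply: (sq_inj (v := vl (m (i, true)))); [exact: Hfc | exact: Hgc | apply: vl_cases | ].
by rewrite U1 U2.
Qed.

Definition sg (b : bool) : R := if b then 1 else -1.
Definition hmap n (P : sidx n -> sidx n) (x : pt n) : pt n :=
  fun i => sg (P (i, true)).2 * x (P (i, true)).1.

Section Hmap.
Variables (n : nat) (P Q : sidx n -> sidx n).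
Hypothesis PQ : cancel P Q.
Hypothesis QP : cancel Q P.
Hypothesis Ps : forall k, P (sneg k) = sneg (P k).

Lemma Qs : forall k, Q (sneg k) = sneg (Q k).
Proof. by move=> k; apply: (can_inj PQ); rewrite Ps !QP. Qed.

Lemma hmap_onfacet k x : onfacet k x -> onfacet (Q k) (hmap P x).
Proof.
rewrite !onfacetE /hmap => Hx.
case E : (Q k) => [i b] /=.
case: b E => E.
- have -> : P (i, true) = k by rewrite -E QP.
  rewrite Hx /vl /sg /=; case: k.2 => /=; field.
- have -> : P (i, true) = sneg k.
    have -> : (i, true) = sneg (Q k) by rewrite E.
    by rewrite Ps QP.
  rewrite /sneg /= Hx /vl /sg; case: k.2 => /=; field.
Qed.

Lemma hmap_cube x : cube x -> cube (hmap P x).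
Proof.
move=> H i; rewrite /hmap /sg; have := H (P (i, true)).1; case: (P (i, true)).2; lra.
Qed.

Lemma pi_inj : injective (fun i : 'I_n => (P (i, true)).1).
Proof.
move=> a b /= E.
case: (eqVneq (P (a, true)) (P (b, true))) => [/(can_inj PQ) [] //|H].
have := @spair_eq n (P (a, true)) (P (b, true)) E (elimN eqP H); rewrite -Ps => /(can_inj PQ) //.
Qed.

Lemma hmap_sd2 x y : sd2 (hmap P x) (hmap P y) = sd2 x y.
Proof.
rewrite /sd2 [RHS](reindex_inj pi_inj) /=; apply: eq_bigr => i _.
rewrite /hmap /sg; case: (P (i, true)).2; ring.
Qed.

Lemma hmap_K x : hmap P (hmap Q x) = x.
Proof.
apply: functional_extensionality => i; rewrite /hmap.
case E : (P (i, true)) => [a b] /=.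
case: b E => E.
- have -> : Q (a, true) = (i, true) by rewrite -E PQ.
  rewrite /sg /=; ring.
- have -> : Q (a, true) = (i, false).
    have -> : (a, true) = sneg (P (i, true)) by rewrite E.
    by rewrite Qs PQ.
  rewrite /sg /=; ring.
Qed.
End Hmap.

Lemma mo_comp n (f g : pt n -> pt n) A B C :
  maps_onto f A B -> maps_onto g B C -> maps_onto (fun x => g (f x)) A C.
Proof.
move=> H1 H2 y; split.
- case=> x [Ax <-]; apply/H2; exists (f x); split => //; apply/H1; by exists x.
- move=> /H2 [z [Bz <-]]; have [x [Ax <-]] := proj2 (H1 z) Bz; by exists x.
Qed.

Lemma mo_ext n (f g : pt n -> pt n) A B :
  (forall x, A x -> f x = g x) -> maps_onto f A B -> maps_onto g A B.
Proof.
move=> E H y; split.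
- case=> x [Ax <-]; rewrite -E //; apply/H; by exists x.
- move=> /H [x [Ax <-]]; exists x; split => //; by rewrite E.
Qed.

Lemma mo_uniq n (f : pt n -> pt n) A B C :
  maps_onto f A B -> maps_onto f A C -> forall y, B y <-> C y.
Proof. move=> H1 H2 y; rewrite -(H1 y) -(H2 y) //. Qed.

Lemma mo_inv n (f g : pt n -> pt n) A B :
  cancel f g -> cancel g f -> maps_onto f A B -> maps_onto g B A.
Proof.
move=> fK gK H y; split.
- case=> x [Bx <-]; have [a [Aa <-]] := proj2 (H x) Bx; by rewrite fK.
- move=> Ay; exists (f y); split; last by rewrite fK.
  apply/H; by exists y.
Qed.

Lemma mo_face2 n (f : pt n -> pt n) a b a' b' :
  injective f -> maps_onto f (facet a) (facet a') -> maps_onto f (facet b) (facet b') ->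
  maps_onto f (face [:: a; b]) (face [:: a'; b']).
Proof.
move=> inj Ha Hb y.
have E2 : forall c d (z : pt n), face [:: c; d] z <-> facet c z /\ facet d z.
  move=> c d z; rewrite face2E !facetE; split; [case=> ? [? ?] | case=> [[? ?] [? ?]]]; by [].
split.
- case=> x [/E2 [Hxa Hxb] <-]; apply/E2; split; [apply/Ha | apply/Hb]; by exists x.
- case/E2 => /Ha [x1 [H1 E1]] /Hb [x2 [H2 E2']].
  have E : x1 = x2 by apply: inj; rewrite E1 E2'.
  subst x2; exists x1; split => //; by apply/E2.
Qed.

Lemma fps_onto n omega (tau : sidx n -> pt n -> pt n) :
  facets_pairing omega tau -> forall j, maps_onto (tau j) (facet j) (facet (omega j)).
Proof.
case=> Hom [Hf [_ [_ [Hinv _]]]] j y; split.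
- case=> x [Hx <-]; by apply: Hf.
- move=> Hy; exists (tau (omega j) y); split.
  + by have := Hf _ _ Hy; rewrite Hom.
  + by have := Hinv _ _ Hy; rewrite Hom.
Qed.

Lemma sabs_S n (S Sinv : sidx n -> sidx n) :
  cancel S Sinv -> (forall k, S (sneg k) = sneg (S k)) ->
  forall j k : sidx n, k.1 != j.1 -> (S k).1 != (S j).1.
Proof.
move=> SK Ss j k Hk; apply/negP => /eqP E.
case: (eqVneq (S j) (S k)) => H.
- by move: Hk; rewrite (can_inj SK H) eqxx.
- have := @spair_eq n (S j) (S k) (esym E) (elimN eqP H); rewrite -Ss => /(can_inj SK) Ek.
  by move: Hk; rewrite Ek eqxx.
Qed.

Lemma hmap_facet n (P Q : sidx n -> sidx n) :
  cancel P Q -> cancel Q P -> (forall k, P (sneg k) = sneg (P k)) ->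
  forall a, maps_onto (hmap P) (facet a) (facet (Q a)).
Proof.
move=> PQ QP Ps a y; split.
- case=> x [/facetE [Hc Ho] <-]; apply/facetE; split; [by apply: hmap_cube | by apply: hmap_onfacet].
- case/facetE => Hc Ho; exists (hmap Q y); split; last by apply: hmap_K.
  apply/facetE; split; first by apply: hmap_cube.
  have Qs' := Qs PQ QP Ps.
  by have := hmap_onfacet PQ Qs' Ho; rewrite QP.
Qed.

Lemma dir_back (n : nat)
    (omega : sidx n -> sidx n) (tau : sidx n -> pt n -> pt n)
    (omega' : sidx n -> sidx n) (tau' : sidx n -> pt n -> pt n)
    (st st' : sidx n -> sidx n -> sidx n) :
  regular_fps omega tau -> regular_fps omega' tau' ->
  sigma_tilde omega tau st -> sigma_tilde omega' tau' st' ->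
  shuffled_conjugate omega st omega' st' -> fps_equivalent omega tau omega' tau'.
Proof.
move=> [Hf [_ Hiso]] [Hf' [_ Hiso']] Hst Hst' [S [Sinv [[_ Ss] [SK [SiK [Hom Hstr]]]]]].
have Sis := Qs SK SiK Ss.
pose h := hmap Sinv; pose hinv := hmap S.
have hK : cancel h hinv by move=> x; apply: (hmap_K SK SiK Ss).
have hiK : cancel hinv h by move=> x; apply: (hmap_K SiK SK Sis).
have hfac : forall a, maps_onto h (facet a) (facet (S a)) := hmap_facet SiK SK Sis.
have hifac : forall a, maps_onto hinv (facet a) (facet (Sinv a)) := hmap_facet SK SiK Ss.
have hsd : forall x y, sd2 (h x) (h y) = sd2 x y := hmap_sd2 SiK Sis.
have hisd : forall x y, sd2 (hinv x) (hinv y) = sd2 x y := hmap_sd2 SK Ss.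
exists h, hinv; split; [split|split; [exact hK | split; [exact hiK|]]].
- by move=> x y; apply: sd2_edist.
- move=> y; split.
  + case=> x [Hx <-]; by apply: hmap_cube.
  + move=> Hy; exists (hinv y); split; [by apply: hmap_cube | by apply: hiK].
move=> j j' Hjj' p Hp.
have Ej' : j' = S j.
  apply: facet_eq => y; exact: (mo_uniq Hjj' (hfac j)).
subst j'.
have hinj : injective h := can_inj hK.
have hiinj : injective hinv := can_inj hiK.
apply: (@uniqueness n j (omega j) (st j) (tau j) (fun x => hinv (tau' (S j) (h x))) _ _ _ _ _ _ p Hp).
- by move=> x y Hx Hy; apply: edist_d2; apply: Hiso.
- by move=> x Hx; case: Hf => _ [H _]; apply: H.
- by move=> k Hk; have [_ [_ H]] := Hst j; apply: H.
- move=> x y Hx Hy; rewrite hisd.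
  have Hx' : facet (S j) (h x) by apply/(hfac j); exists x.
  have Hy' : facet (S j) (h y) by apply/(hfac j); exists y.
  rewrite (edist_d2 (Hiso' _ _ _ Hx' Hy')) //.
- move=> x Hx; rewrite Hom; apply/(hifac _); exists (tau' (S j) (h x)); split => //.
  case: Hf' => _ [H _]; apply: H; apply/(hfac j); by exists x.
- move=> k Hk.
  have HSk := sabs_S SK Ss Hk.
  have A := mo_face2 hinj (hfac j) (hfac k).
  have [_ [_ B0]] := Hst' (S j); have B := B0 _ HSk.
  have C := mo_face2 hiinj (hifac (omega' (S j))) (hifac (st' (S j) (S k))).
  have := mo_comp (mo_comp A B) C; by rewrite -Hom -Hstr.
Qed.

Lemma dir_fwd (n : nat)
    (omega : sidx n -> sidx n) (tau : sidx n -> pt n -> pt n)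
    (omega' : sidx n -> sidx n) (tau' : sidx n -> pt n -> pt n)
    (st st' : sidx n -> sidx n -> sidx n) :
  regular_fps omega tau -> regular_fps omega' tau' ->
  sigma_tilde omega tau st -> sigma_tilde omega' tau' st' ->
  fps_equivalent omega tau omega' tau' -> shuffled_conjugate omega st omega' st'.
Proof.
move=> [Hf [_ Hiso]] [Hf' [_ Hiso']] Hst Hst' [h [hinv [[Hhd Hhc] [hK [hiK Heq]]]]].
have hsd : forall x y, sd2 (h x) (h y) = sd2 x y by move=> x y; apply: edist_d2.
have hisd : forall x y, sd2 (hinv x) (hinv y) = sd2 x y.
  by move=> x y; rewrite -(hsd (hinv x) (hinv y)) !hiK.
have Hc : forall x, cube x -> cube (h x) by move=> x Hx; apply/Hhc; exists x.
have Hic : forall y, cube y -> cube (hinv y).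
  by move=> y /Hhc [x [Hx <-]]; rewrite hK.
have E1 := facet_image hsd hK hiK Hc Hic.
have E2 := facet_image hisd hiK hK Hic Hc.
pose S := fun j => proj1_sig (constructive_indefinite_description _ (E1 j)).
pose Sinv := fun j => proj1_sig (constructive_indefinite_description _ (E2 j)).
have HS : forall j, maps_onto h (facet j) (facet (S j)).
  by move=> j; rewrite /S; case: constructive_indefinite_description.
have HSi : forall j, maps_onto hinv (facet j) (facet (Sinv j)).
  by move=> j; rewrite /Sinv; case: constructive_indefinite_description.
have SK : cancel S Sinv.
  move=> j; apply: facet_eq => y; apply: (mo_uniq (HSi (S j))).
  exact: (mo_inv hK hiK (HS j)).
have SiK : cancel Sinv S.
  move=> j; apply: facet_eq => y; apply: (mo_uniq (HS (Sinv j))).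
  exact: (mo_inv hiK hK (HSi j)).
have hinj : injective h := can_inj hK.
have hiinj : injective hinv := can_inj hiK.
have Ss : forall k, S (sneg k) = sneg (S k).
  move=> k; apply: facet_disj => y [/(HS k) [x1 [H1 E1']] /(HS (sneg k)) [x2 [H2 E2']]].
  have E : x1 = x2 by apply: hinj; rewrite E1' E2'.
  subst x2; case/facetE: H1 => _ Ho1; case/facetE: H2 => _ Ho2.
  apply: (@vl_sneg_neq _ k); move: Ho1 Ho2; rewrite !onfacetE => <- <- //.
have Sis := Qs SK SiK Ss.
have Hom : forall j, omega j = Sinv (omega' (S j)).
  move=> j; apply: facet_eq => y; apply: (mo_uniq (fps_onto Hf j)).
  apply: (mo_ext (f := fun x => hinv (tau' (S j) (h x)))).
    by move=> x Hx; rewrite (Heq j (S j) (HS j)).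
  exact: (mo_comp (mo_comp (HS j) (fps_onto Hf' (S j))) (HSi _)).
exists S, Sinv; split; first by split => //; exists Sinv.
split => //; split => //; split => // j k.
have [Hj1 [Hj2 Hj3]] := Hst j.
have [Hj1' [Hj2' Hj3']] := Hst' (S j).
case: (eqVneq k j) => [->|Hkj]; first by rewrite Hj1 Hj1' Hom.
case: (eqVneq k (sneg j)) => [->|Hkn]; first by rewrite Hj2 Ss Hj2' Sis Hom.
have Hk : k.1 != j.1.
  apply/negP => /eqP E; case: (eqVneq j k) => H; first by move: Hkj; rewrite H eqxx.
  by move: Hkn; rewrite (spair_eq (esym E) (elimN eqP H)) eqxx.
have HSk := sabs_S SK Ss Hk.
have A := mo_face2 hinj (HS j) (HS k).
have B := Hj3' _ HSk.
have C := mo_face2 hiinj (HSi (omega' (S j))) (HSi (st' (S j) (S k))).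
have D := mo_comp (mo_comp A B) C.
rewrite -Hom in D.
have D' : maps_onto (tau j) (face [:: j; k]) (face [:: omega j; Sinv (st' (S j) (S k))]).
  apply: (mo_ext (f := fun x => hinv (tau' (S j) (h x)))) => //.
  by move=> x /face_facet1 Hx; rewrite (Heq j (S j) (HS j)).
have Hjk : j.1 != k.1 by rewrite eq_sym.
have Hy0 : face [:: omega j; st j k] (tau j (e2 j k)).
  apply/(Hj3 _ Hk); exists (e2 j k); split => //; exact: e2_face.
apply: (face_eq2 Hy0) => y; exact: (mo_uniq (Hj3 _ Hk) D').
Qed.

Close Scope R_scope.
Unset Implicit Arguments.

Theorem mainTheorem2 (n : nat)
    (omega : sidx n -> sidx n) (tau : sidx n -> pt n -> pt n)
    (omega' : sidx n -> sidx n) (tau' : sidx n -> pt n -> pt n)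
    (st st' : sidx n -> sidx n -> sidx n) :
  regular_fps omega tau -> regular_fps omega' tau' ->
  sigma_tilde omega tau st -> sigma_tilde omega' tau' st' ->
  (fps_equivalent omega tau omega' tau' <-> shuffled_conjugate omega st omega' st').
Proof.
move=> H1 H2 H3 H4; split; [exact: dir_fwd | exact: dir_back].
Qed.
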